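(* Let $\mathcal T$ be a tube, let $\phi=\{M_1,\dots,M_n\}$ be a brick set in $\mathcal T$, and let $C=(\dim\mathrm{Ext}^1_{\mathcal T}(M_i,M_j))_{i,j}$ be its adjacency matrix. If $C$ is irreducible, then there is a permutation matrix $P$ such that $P^TCP$ is the $n\times n$ cyclic matrix whose entries are $1$ at positions $(i,i+1)$ for $1\le i\le n-1$ and at $(n,1)$, and $0$ elsewhere (for $n=1$ this is the matrix $(1)$).
   Context: $\Bbbk$ is algebraically closed. A tube (of rank $r\ge1$) is the $\Bbbk$-linear abelian category of finite-dimensional nilpotent representations of the quiver with $r$ vertices forming an oriented cycle (for $r=1$, one vertex with one loop); it is a uniserial hereditary category with Auslander–Reiten translation $\tau$ and Serre duality $\mathrm{Ext}^1(X,Y)\cong D\mathrm{Hom}(Y,\tau X)$. A brick is an object $M$ with $\mathrm{Hom}(M,M)=\Bbbk$; a brick set is a finite set of bricks $\{M_1,\dots,M_n\}$ with $\dim\mathrm{Hom}(M_i,M_j)=\delta_{ij}$. An $n\times n$ matrix $C$ is reducible if either $n\ge2$ and there is a permutation matrix $P$ with $P^TCP=\begin{pmatrix}C_1&C_2\\0&C_3\end{pmatrix}$ with $C_1,C_3$ square of positive size, or $n=1$ and $C=0$; otherwise $C$ is irreducible. *)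

(* Defs.v *)
From HB Require Import structures.
From mathcomp Require Import all_boot all_order all_algebra all_fingroup.
Set Implicit Arguments. Unset Strict Implicit. Unset Printing Implicit Defensive.
Import Order.TTheory GRing.Theory Num.Theory.
Local Open Scope ring_scope.

(* Representations of the oriented cycle quiver with r vertices 0 -> 1 -> ... -> r-1 -> 0
   (indices mod r; for r = 1 a single vertex with a loop).  Row-vector convention:
   the arrow i -> i+1 acts by v |-> v *m tmap i. *)
Record qrep (F : fieldType) (r : nat) := QRep {
  tdim : 'I_r -> nat ;
  tmap : forall i : 'I_r, 'M[F]_(tdim i, tdim (ordS i)) }.

Fixpoint pathmx (F : fieldType) (r : nat) (M : qrep F r) (i : 'I_r) (n : nat)
  : 'M[F]_(tdim M i, tdim M (iter n (@ordS r) i)) :=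
  match n with
  | 0 => 1%:M
  | n'.+1 => pathmx M i n' *m tmap M (iter n' (@ordS r) i)
  end.

Definition nilpotent_rep (F : fieldType) (r : nat) (M : qrep F r) : Prop :=
  exists N : nat, forall i : 'I_r, pathmx M i N = 0.

Definition in_tube (F : fieldType) (r : nat) (M : qrep F r) : Prop :=
  (0 < r)%N /\ nilpotent_rep M.

(* entry of a matrix at natural-number indices (0 outside the range) *)
Definition mxent (F : fieldType) (m n : nat) (A : 'M[F]_(m, n)) (a b : nat) : F :=
  match @insub _ (fun x => (x < m)%N) 'I_m a, @insub _ (fun x => (x < n)%N) 'I_n b with
  | Some i, Some j => A i j
  | _, _ => 0
  end.

Section HomExt.
Variables (F : fieldType) (r : nat) (M N : qrep F r).

(* coordinates of  (+)_i Hom_F(M_i, N_i)  *)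
Definition vtx_idx := {i : 'I_r & ('I_(tdim M i) * 'I_(tdim N i))%type}.
(* coordinates of  (+)_{arrows i -> i+1} Hom_F(M_i, N_{i+1})  *)
Definition arr_idx := {i : 'I_r & ('I_(tdim M i) * 'I_(tdim N (ordS i)))%type}.

(* coefficient of f_j[p,q] in  (tmap M i *m f_{i+1} - f_i *m tmap N i)[a,b] *)
Definition ringel_entry (x : vtx_idx) (y : arr_idx) : F :=
  let j := tag x in let p := (tagged x).1 in let q := (tagged x).2 in
  let i := tag y in let a := (tagged y).1 in let b := (tagged y).2 in
  (if (j == ordS i) && (val q == val b) then mxent (tmap M i) a p else 0)
  - (if (j == i) && (val p == val a) then mxent (tmap N i) q b else 0).

(* matrix of Ringel's map  (+)_i Hom(M_i,N_i) -> (+)_a Hom(M_{s a}, N_{t a}),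
   (f_i)_i |-> (tmap M i *m f_{i+1} - f_i *m tmap N i)_i, acting on row vectors *)
Definition ringel_mx : 'M[F]_(#|{: vtx_idx}|, #|{: arr_idx}|) :=
  \matrix_(x, y) ringel_entry (enum_val x) (enum_val y).

(* Hom(M,N) = kernel of Ringel's map, Ext^1(M,N) = its cokernel *)
Definition dimHom : nat := (#|{: vtx_idx}| - \rank ringel_mx)%N.
Definition dimExt1 : nat := (#|{: arr_idx}| - \rank ringel_mx)%N.

End HomExt.

Definition brick_set (F : fieldType) (r n : nat) (M : 'I_n -> qrep F r) : Prop :=
  (forall i, in_tube (M i)) /\
  (forall i j, dimHom (M i) (M j) = (i == j) :> nat).

Definition adj_mx (F : fieldType) (r n : nat) (M : 'I_n -> qrep F r) : 'M[int]_n :=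
  \matrix_(i, j) (dimExt1 (M i) (M j))%:Z.

(* reducibility as in the paper; the block upper-triangular form P^T C P = [C1 C2; 0 C3]
   with C1 of size k x k, 0 < k < n, is written out entrywise *)
Definition reducible_mx (n : nat) (C : 'M[int]_n) : Prop :=
  ((1 < n)%N /\ exists P : 'M[int]_n, is_perm_mx P /\
      exists k : nat, (0 < k < n)%N /\
        forall i j : 'I_n, (k <= i)%N -> (j < k)%N -> (P^T *m C *m P) i j = 0)
  \/ (n = 1%N /\ C = 0).

Definition irreducible_mx (n : nat) (C : 'M[int]_n) : Prop := ~ reducible_mx C.

Definition cyclic_mx (n : nat) : 'M[int]_n :=
  \matrix_(i, j) (if val j == ((val i).+1 %% n)%N then 1 else 0).

(* Main.v *)
Require Import Defs.
From HB Require Import structures.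
From mathcomp Require Import all_boot all_order all_algebra all_fingroup.
From mathcomp Require Import zify.
Set Implicit Arguments. Unset Strict Implicit. Unset Printing Implicit Defensive.

Lemma card_vtx (F : fieldType) r (M N : qrep F r) :
  #|{: vtx_idx M N}| = (\sum_i tdim M i * tdim N i)%N.
Proof.
rewrite card_tagged sumnE big_map big_enum /=.
by apply: eq_bigr => i _; rewrite card_prod !card_ord.
Qed.

Lemma card_arr (F : fieldType) r (M N : qrep F r) :
  #|{: arr_idx M N}| = (\sum_i tdim M i * tdim N (ordS i))%N.
Proof.
rewrite card_tagged sumnE big_map big_enum /=.
by apply: eq_bigr => i _; rewrite card_prod !card_ord.
Qed.

Lemma euler (F : fieldType) r (M N : qrep F r) :
  (dimExt1 M N + \sum_i tdim M i * tdim N i =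
   dimHom M N + \sum_i tdim M i * tdim N (ordS i))%N.
Proof.
rewrite /dimExt1 /dimHom -card_vtx -card_arr.
have h1 := rank_leq_row (ringel_mx M N).
have h2 := rank_leq_col (ringel_mx M N).
lia.
Qed.

Lemma quad r (x : 'I_r -> nat) :
  (\sum_i x i * x (ordS i) <= \sum_i x i * x i)%N.
Proof.
have E : (\sum_i x (ordS i) * x (ordS i) = \sum_i x i * x i)%N.
  by symmetry; apply: (reindex_inj (@ordS_inj r)).
rewrite -(leq_pmul2l (isT : 0 < 2)%N) !big_distrr /=.
have -> : (\sum_i 2 * (x i * x i) = \sum_i (x i * x i + x (ordS i) * x (ordS i)))%N.
  rewrite [RHS]big_split /= -big_distrr /= mul2n -addnn; congr (_ + _); exact: esym E.
apply: leq_sum => i _.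
have h := (nat_AGM2 (x i) (x (ordS i))).1; rewrite sqrnD in h.
rewrite !mulnn; lia.
Qed.

Lemma sum_sq r n (d : 'I_n -> 'I_r -> nat) (g : 'I_r -> 'I_r) :
  (\sum_i \sum_j \sum_v d i v * d j (g v) =
   \sum_v (\sum_i d i v) * (\sum_j d j (g v)))%N.
Proof.
rewrite exchange_big /=. under eq_bigr => i _ do rewrite exchange_big /=.
rewrite exchange_big /=; apply: eq_bigr => v _.
rewrite big_distrl exchange_big /=; apply: eq_bigr => i _; by rewrite big_distrr.
Qed.

Lemma total_ext (F : fieldType) r n (M : 'I_n -> qrep F r) :
  brick_set M -> (\sum_i \sum_j dimExt1 (M i) (M j) <= n)%N.
Proof.
case=> _ hom.
have e : (\sum_i \sum_j (dimExt1 (M i) (M j) + \sum_v tdim (M i) v * tdim (M j) v) =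
          \sum_i \sum_j (dimHom (M i) (M j) + \sum_v tdim (M i) v * tdim (M j) (ordS v)))%N.
  by apply: eq_bigr => i _; apply: eq_bigr => j _; apply: euler.
have hn : (\sum_i \sum_j dimHom (M i) (M j) = n)%N.
  under eq_bigr => i _ do under eq_bigr => j _ do rewrite hom.
  rewrite -[RHS]card_ord -sum1_card; apply: eq_bigr => i _.
  by rewrite (bigD1 i) //= eqxx big1 // => j; rewrite eq_sym => /negbTE ->.
have q := quad (fun v => \sum_i tdim (M i) v).
move: e; under eq_bigr => i _ do rewrite big_split /=.
rewrite big_split /=.
under [RHS]eq_bigr => i _ do rewrite big_split /=.
rewrite [RHS]big_split /= hn.
rewrite (sum_sq (fun i v => tdim (M i) v) id) (sum_sq (fun i v => tdim (M i) v) (@ordS r)) /=.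
move=> e; simpl in q.
rewrite -(leq_add2r (\sum_(v < r) (\sum_(i < n) tdim (M i) v) * \sum_(j < n) tdim (M j) v)) e leq_add2l; exact: q.
Qed.

Lemma perm_of_seq n (s : seq 'I_n) : uniq s -> size s = n ->
  exists p : 'S_n, forall i : 'I_n, p i = nth i s i.
Proof.
move=> us ss.
have inj : injective (fun i : 'I_n => nth i s i).
  move=> i j /= e; apply/val_inj/eqP.
  have hi : (i < size s)%N by rewrite ss.
  have hj : (j < size s)%N by rewrite ss.
  by rewrite -(nth_uniq i hi hj us) e (set_nth_default i j hj).
by exists (perm inj) => i; rewrite permE.
Qed.

Lemma conj_entry n (C : 'M[int]_n) (p : 'S_n) i j :
  ((perm_mx (p^-1)%g)^T *m C *m perm_mx (p^-1)%g)%R i j = C (p i) (p j).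
Proof. by rewrite tr_perm_mx invgK -row_permE -col_permE !mxE. Qed.

Lemma red_of_set n (C : 'M[int]_n) (A : {set 'I_n}) :
  (1 < n)%N -> (0 < #|A| < n)%N ->
  (forall i j, i \notin A -> j \in A -> C i j = 0%R) -> reducible_mx C.
Proof.
move=> n1 /andP[k0 kn] hC; left; split => //.
set s := enum A ++ enum (~: A).
have us : uniq s.
  rewrite cat_uniq !enum_uniq /= andbT; apply/hasPn => x.
  by rewrite !mem_enum in_setC.
have ss : size s = n by rewrite size_cat -!cardE cardsC card_ord.
have [p hp] := perm_of_seq us ss.
exists (perm_mx (p^-1)%g); split; first by apply/is_perm_mxP; exists (p^-1)%g.
exists #|A|; rewrite k0 kn; split => // i j hi hj.
rewrite conj_entry; apply: hC.
  rewrite hp /s nth_cat -cardE ltnNge hi /=.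
  have : nth i (enum (~: A)) (i - #|A|) \in enum (~: A).
    apply: mem_nth; rewrite -cardE; have := cardsC A; rewrite card_ord.
    by move=> e; rewrite ltn_subLR // e.
  by rewrite mem_enum in_setC.
by rewrite hp /s nth_cat -cardE hj -mem_enum; apply: mem_nth; rewrite -cardE.
Qed.

Lemma sum_ones n (x : 'I_n -> nat) :
  (forall i, 0 < x i)%N -> (\sum_i x i <= n)%N -> forall i, x i = 1%N.
Proof.
move=> h hs i0; apply/eqP; rewrite eqn_leq h andbT; apply: contraLR hs.
rewrite -ltnNge => h2; rewrite -ltnNge (bigD1 i0) //=.
have : (\sum_(i | i != i0) 1 <= \sum_(i | i != i0) x i)%N by apply: leq_sum => i _; exact: h i.
rewrite sum1_card cardC1 card_ord => h3.
apply: leq_trans _ (leq_add h2 h3); move: (ltn_ord i0); lia.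
Qed.

Lemma two_le_sum n (x : 'I_n -> nat) j k : j != k -> (x j + x k <= \sum_i x i)%N.
Proof.
move=> jk; rewrite (bigD1 j) //= (bigD1 k) /=; last by rewrite eq_sym.
by rewrite addnA leq_addr.
Qed.

Local Open Scope ring_scope.
Lemma comb n (c : 'I_n -> 'I_n -> nat) :
  (\sum_i \sum_j c i j <= n)%N ->
  irreducible_mx (\matrix_(i, j) (Posz (c i j))) ->
  exists P : 'M[int]_n, is_perm_mx P /\
    (P^T *m (\matrix_(i, j) (Posz (c i j))) *m P)%R = cyclic_mx n.
Proof.
set C := \matrix_(i, j) _ => hs hC.
have hCE : forall i j, C i j = (Posz (c i j)) by move=> i j; rewrite mxE.
have n1 : forall a b : 'I_n, n = 1%N -> a = b.
  by move=> a b e; apply/val_inj => /=; have := ltn_ord a; have := ltn_ord b; lia.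
have row : forall i, [exists j, 0 < c i j]%N.
  move=> i; apply: contraT => /existsPn h; exfalso.
  have h0 : forall j, c i j = 0%N by move=> j; move: (h j); rewrite lt0n negbK => /eqP.
  have [e|ne] := eqVneq n 1%N.
    apply: hC; right; split => //; apply/matrixP => a b.
    by rewrite hCE mxE (n1 a i e) h0.
  apply: hC; apply: (@red_of_set _ _ [set~ i]).
  - move: (ltn_ord i) ne; lia.
  - rewrite cardsC1 card_ord; move: (ltn_ord i) ne; lia.
  - move=> a b; rewrite !inE negbK => /eqP -> _; by rewrite hCE h0.
have col : forall j, [exists i, 0 < c i j]%N.
  move=> j; apply: contraT => /existsPn h; exfalso.
  have h0 : forall i, c i j = 0%N by move=> i; move: (h i); rewrite lt0n negbK => /eqP.
  have [e|ne] := eqVneq n 1%N.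
    apply: hC; right; split => //; apply/matrixP => a b.
    by rewrite hCE mxE (n1 b j e) h0.
  apply: hC; apply: (@red_of_set _ _ [set j]).
  - move: (ltn_ord j) ne; lia.
  - rewrite cards1; move: (ltn_ord j) ne; lia.
  - move=> a b _; rewrite !inE => /eqP ->; by rewrite hCE h0.
have rs : forall i, (\sum_j c i j)%N = 1%N.
  apply: sum_ones => // i; have /existsP [j hj] := row i.
  by apply: leq_trans hj _; rewrite (bigD1 j) //= leq_addr.
have cs : forall j, (\sum_i c i j)%N = 1%N.
  apply: sum_ones; last by rewrite exchange_big.
  move=> j; have /existsP [i hi] := col j.
  by apply: leq_trans hi _; rewrite (bigD1 i) //= leq_addr.
pose f i := odflt i [pick j | (0 < c i j)%N].
have hf : forall i, (0 < c i (f i))%N.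
  move=> i; rewrite /f; case: pickP => [j //|h].
  by have /existsP [j hj] := row i; move: (h j); rewrite hj.
have cij : forall i j, c i j = (f i == j) :> nat.
  move=> i j; case: eqP => [<-|/eqP ne].
    change (c i (f i) = 1%N); apply/eqP; rewrite eqn_leq hf andbT -(rs i).
    by rewrite (bigD1 (f i)) //= leq_addr.
  have := two_le_sum (c i) ne; rewrite rs; have := hf i; lia.
have injf : injective f.
  move=> i i' e; apply/eqP; apply: contraT => ne.
  have := two_le_sum (fun k => c k (f i)) ne; rewrite cs /= !cij e !eqxx; lia.
have [n0|npos] := posnP n.
  exists 1%:M; split; first by apply/is_perm_mxP; exists 1%g; rewrite perm_mx1.
  by apply/matrixP => i j; have := ltn_ord i; lia.
pose x0 : 'I_n := Ordinal npos.
have conn : forall y, fconnect f x0 y.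
  move=> y0; apply: contraT => ny0; exfalso.
  pose A := [set y | fconnect f x0 y].
  have kA : (#|A| < n)%N.
    rewrite -[X in (_ < X)%N]card_ord -cardsT; apply: proper_card.
    rewrite properT; apply/eqP => e; have : y0 \in A by rewrite e in_setT.
    by rewrite inE (negbTE ny0).
  have k0 : (0 < #|A|)%N by apply/card_gt0P; exists x0; rewrite inE connect0.
  apply: hC; apply: (@red_of_set _ _ A); first by lia.
    by rewrite k0 kA.
  move=> i j; rewrite !inE hCE cij => ni hj; case: eqP => // e; exfalso.
  move: ni; rewrite -e in hj; apply/negP/negPn.
  by apply: connect_trans hj _; rewrite fconnect_sym // fconnect1.
have ord_n : fingraph.order f x0 = n.
  rewrite /fingraph.order -[RHS]card_ord; apply: eq_card => y; rewrite inE.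
  by have := conn y; rewrite /in_mem /=.
have so : size (fingraph.orbit f x0) = n := etrans (fingraph.size_orbit f x0) ord_n.
have [p hp] := perm_of_seq (fingraph.orbit_uniq f x0) so.
have hpi : forall i : 'I_n, p i = iter i f x0.
  move=> i; rewrite hp (set_nth_default x0); last by rewrite so.
  by rewrite /fingraph.orbit ord_n nth_traject.
have fp : forall i, f (p i) = p (ordS i).
  move=> i; rewrite !hpi -iterS /=.
  case: (ltngtP i.+1 n) => h; first by rewrite modn_small.
    by move: (ltn_ord i); lia.
  have -> : (i.+1 %% n = 0)%N by rewrite h modnn.
  by rewrite /= -iterS h; move: (iter_order injf x0); rewrite ord_n.
exists (perm_mx (p^-1)%g); split; first by apply/is_perm_mxP; exists (p^-1)%g.
apply/matrixP => i j; rewrite conj_entry hCE cij fp (inj_eq perm_inj) mxE.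
have -> : (ordS i == j) = (val j == i.+1 %% n)%N by rewrite eq_sym.
by case: ifP.
Qed.

Local Close Scope ring_scope.

Theorem lemma5p1 (F : closedFieldType) (r n : nat) (M : 'I_n -> qrep F r) :
  brick_set M -> irreducible_mx (adj_mx M) ->
  exists P : 'M[int]_n, is_perm_mx P /\ (P^T *m adj_mx M *m P)%R = cyclic_mx n.
Proof.
move=> hb hi.
exact: (@comb n (fun i j => dimExt1 (M i) (M j)) (total_ext hb) hi).
Qed.
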